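(* Let $I$ be an LBFLO instance with optimal solution $O$ of cost $Cost_I(O)$, and let $\delta\ge 0$. For each facility $i\in\mathcal{F}$ let $N_i$ be a set of $L_i$ clients nearest to $i$ (with respect to $c$). Let $I'$ be the FLO instance with the same facilities, clients, metric and outlier bound $t$ as $I$, with the lower bounds removed, and with opening costs $f'_i = f_i + \delta\sum_{j\in N_i} c(i,j)$. Then the optimal cost of $I'$ is at most $(1+\delta)\,Cost_I(O)$.
   Context: FLO: facilities $\mathcal{F}$, clients $\mathcal{C}$ with $|\mathcal{C}|=m$, opening costs $f_i\ge0$, metric $c$ on $\mathcal{F}\cup\mathcal{C}$, integer $t\ge0$; a feasible solution opens $F'\subseteq\mathcal{F}$ and assigns at least $m-t$ clients to facilities in $F'$, with cost $\sum_{i\in F'} f_i+\sum_{j\text{ assigned}} c(j,\sigma(j))$. LBFLO: additionally each $i\in\mathcal{F}$ has a nonnegative integer lower bound $L_i$, and every opened facility must be assigned at least $L_i$ clients. *)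

(* Defs.v *)
From HB Require Import structures.
From mathcomp Require Import all_boot all_order all_algebra.
Set Implicit Arguments. Unset Strict Implicit. Unset Printing Implicit Defensive.
Import Order.TTheory GRing.Theory Num.Theory.
Local Open Scope ring_scope.

Definition is_metric (R : realFieldType) (T : Type) (d : T -> T -> R) : Prop :=
  (forall x, d x x = 0) /\ (forall x y, 0 <= d x y) /\
  (forall x y, d x y = d y x) /\ (forall x y z, d x z <= d x y + d y z).

(* A solution: a set of opened facilities and an assignment of clients;
   [None] means the client is an outlier (not assigned). *)
Definition solution (F C : finType) := ({set F} * (C -> option F))%type.

Section Defs.
Variables (R : realFieldType) (F C : finType).

Definition assigned_to (s : solution F C) (i : F) : {set C} :=
  [set j | s.2 j == Some i].

Definition assigned (s : solution F C) : {set C} :=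
  [set j | s.2 j != None].

Definition flo_feasible (t : nat) (s : solution F C) : Prop :=
  (forall j i, s.2 j = Some i -> i \in s.1) /\
  (#|C| - t <= #|assigned s|)%N.

Definition lbflo_feasible (t : nat) (L : F -> nat) (s : solution F C) : Prop :=
  flo_feasible t s /\ (forall i, i \in s.1 -> (L i <= #|assigned_to s i|)%N).

Definition fc (d : F + C -> F + C -> R) (i : F) (j : C) : R := d (inl i) (inr j).

Definition cost (f : F -> R) (d : F + C -> F + C -> R) (s : solution F C) : R :=
  \sum_(i in s.1) f i +
  \sum_(j : C) (match s.2 j with Some i => fc d i j | None => 0 end).

Definition nearest_clients (d : F + C -> F + C -> R) (L : F -> nat) (i : F)
    (N : {set C}) : Prop :=
  #|N| = L i /\ forall j j', j \in N -> j' \notin N -> fc d i j <= fc d i j'.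

End Defs.

(* Main.v *)
Require Import Defs.
From HB Require Import structures.
From mathcomp Require Import all_boot all_order all_algebra.
From mathcomp Require Import lra.
Import Order.TTheory GRing.Theory Num.Theory.
Local Open Scope ring_scope.

Set Implicit Arguments.
Section Aux.
Variables (R : realFieldType) (F C : finType).

Lemma sum_le_card (X Y : {set C}) (g : C -> R) :
  (forall j, 0 <= g j) -> (#|X| <= #|Y|)%N ->
  (forall x y, x \in X -> y \in Y -> g x <= g y) ->
  \sum_(j in X) g j <= \sum_(j in Y) g j.
Proof.
move=> g0 hc hxy.
case: (set_0Vmem Y) => [Y0|[y0 Hy0]].
  move: hc; rewrite Y0 cards0 leqn0 cards_eq0 => /eqP ->.
  by rewrite !big_set0.
case: (@arg_minP _ R _ y0 (mem Y) g Hy0) => m mY mmin.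
apply: (@le_trans _ _ (\sum_(j in X) g m)).
  by apply: ler_sum => x xX; apply: hxy.
apply: (@le_trans _ _ (\sum_(j in Y) g m)).
  rewrite !sumr_const; exact: (ler_wpMn2l (g0 m) hc).
by apply: ler_sum => y yY; apply: mmin.
Qed.

Lemma near_le (g : C -> R) (N A : {set C}) :
  (forall j, 0 <= g j) -> (#|N| <= #|A|)%N ->
  (forall j j', j \in N -> j' \notin N -> g j <= g j') ->
  \sum_(j in N) g j <= \sum_(j in A) g j.
Proof.
move=> g0 hc hn.
rewrite (big_setID A) [X in _ <= X](big_setID N) /= setIC lerD2l.
apply: sum_le_card => //.
  have h1 := cardsID A N; have h2 := cardsID N A.
  rewrite setIC in h2; by rewrite -(leq_add2l #|N :&: A|) h1 h2.
move=> x y; rewrite !inE => /andP[_ xN] /andP[yN _].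
by apply: hn.
Qed.

Definition X := ({set F} * {ffun C -> option F})%type.
Definition toS (x : X) : solution F C := (x.1, fun j => x.2 j).
Definition ofS (s : solution F C) : X := (s.1, [ffun j => s.2 j]).

Lemma cost_ofS (f : F -> R) (d : F + C -> F + C -> R) (s : solution F C) : cost f d (toS (ofS s)) = cost f d s.
Proof.
rewrite /cost /=; congr (_ + _); apply: eq_bigr => j _; by rewrite ffunE.
Qed.

Lemma feas_ofS t (s : solution F C) : flo_feasible t s -> flo_feasible t (toS (ofS s)).
Proof.
rewrite /flo_feasible /assigned /= => [[h1 h2]]; split.
  by move=> j i; rewrite ffunE; apply: h1.
suff -> : [set j | [ffun j => s.2 j] j != None] = [set j | s.2 j != None] by [].
by apply/setP => j; rewrite !inE ffunE.
Qed.

Definition feasb t (x : X) : bool :=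
  [forall j, if x.2 j is Some i then i \in x.1 else true] &&
  (#|C| - t <= #|[set j | x.2 j != None]|)%N.

Lemma feasbP t x : flo_feasible t (toS x) <-> feasb t x.
Proof.
rewrite /flo_feasible /feasb /assigned /=; split.
  move=> [h1 h2]; apply/andP; split => //.
  apply/forallP => j; case E: (x.2 j) => [i|] //; exact: h1 E.
move=> /andP[/forallP h1 h2]; split => // j i E.
by have := h1 j; rewrite E.
Qed.

End Aux.
Unset Implicit Arguments.

Theorem lemma1 (R : realFieldType) (F C : finType)
    (f : F -> R) (d : F + C -> F + C -> R) (t : nat) (L : F -> nat)
    (O : solution F C) (delta : R) (N : F -> {set C}) :
  is_metric d ->
  (forall i, 0 <= f i) ->
  0 <= delta ->
  lbflo_feasible t L O ->
  (forall s, lbflo_feasible t L s -> cost f d O <= cost f d s) ->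
  (forall i, nearest_clients d L i (N i)) ->
  exists s : solution F C,
    flo_feasible t s /\
    (forall s', flo_feasible t s' ->
       cost (fun i => f i + delta * \sum_(j in N i) fc d i j) d s
       <= cost (fun i => f i + delta * \sum_(j in N i) fc d i j) d s') /\
    cost (fun i => f i + delta * \sum_(j in N i) fc d i j) d s
      <= (1 + delta) * cost f d O.
Proof.
move=> [_ [dpos _]] f0 d0 [Ofeas OL] _ Nn.
set f' := (fun i : F => f i + delta * _).
have c0 : forall i j, 0 <= fc d i j by move=> i j; exact: dpos.
have key : cost f' d O <= (1 + delta) * cost f d O.
  rewrite /cost /f' big_split /= -mulr_sumr.
  set SF := \sum_(i in O.1) f i.
  set SN := \sum_(i in O.1) _.
  set conn := \sum_(j : C) _.
  have hSF : 0 <= SF by apply: sumr_ge0.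
  have hSN : SN <= conn.
    apply: (@le_trans _ _ (\sum_(i in O.1) \sum_(j in assigned_to O i) fc d i j)).
      apply: ler_sum => i iS.
      have [hc hn] := Nn i.
      apply: near_le; [by move=> j; apply: c0 | by rewrite hc; exact: OL |].
      by move=> j j' jN j'N; apply: hn.
    under eq_bigr => i _ do rewrite big_mkcond /=.
    rewrite exchange_big /conn; apply: ler_sum => j _.
    case E: (O.2 j) => [i0|].
      case: (boolP (i0 \in O.1)) => hi0.
        rewrite (bigD1 i0) //= inE E eqxx big1 ?addr0 // => i /andP[_ ne].
        by rewrite inE E; case: eqP => // -[] e; rewrite e eqxx in ne.
      rewrite big1 // => i iS; rewrite inE E; case: eqP => // -[] e.
      by rewrite e iS in hi0.
    by rewrite big1 // => i _; rewrite inE E.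
  have hconn : 0 <= conn.
    apply: sumr_ge0 => j _; case: (O.2 j) => // i; exact: c0.
  have : delta * SN <= delta * conn by apply: ler_wpM2l.
  have : 0 <= delta * SF by apply: mulr_ge0.
  move=> h1 h2. lra.
have OX : feasb t (ofS O) by apply/feasbP; apply: feas_ofS.
case: (@arg_minP _ R _ (ofS O) (feasb t) (fun x => cost f' d (toS x)) OX) => x xf xmin.
exists (toS x); split; first by apply/feasbP.
split.
  move=> s' s'f; rewrite -(cost_ofS R f' d s'); apply: (xmin (ofS s')); apply/feasbP; exact: feas_ofS.
apply: le_trans key; rewrite -(cost_ofS R f' d O); exact: (xmin (ofS O) OX).
Qed.
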